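(* For any $d\ge1$, $K\ge2$ and any $\mathbf W\in\mathrm{OB}(d,K)$, $$\frac{\rho_{\text{one-vs-one}}(\mathbf W)^2}{2}\le\rho_{\text{one-vs-rest}}(\mathbf W)\le\rho_{\text{one-vs-one}}(\mathbf W).$$
   Context: $\mathrm{OB}(d,K)$ is the set of real $d\times K$ matrices with unit-norm columns $\mathbf w_1,\dots,\mathbf w_K$. $\operatorname{dist}(\mathbf v,\mathcal W)=\inf\{\|\mathbf v-\mathbf w\|_2:\mathbf w\in\operatorname{conv}(\mathcal W)\}$; $\rho_{\text{one-vs-rest}}(\mathbf W)=\min_k\operatorname{dist}(\mathbf w_k,\{\mathbf w_j\}_{j\ne k})$; $\rho_{\text{one-vs-one}}(\mathbf W)=\min_k\min_{k'\ne k}\|\mathbf w_k-\mathbf w_{k'}\|_2$. *)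

(* Defs.v *)
From mathcomp Require Import all_boot all_order all_algebra.
From mathcomp Require Import classical_sets reals.
Set Implicit Arguments. Unset Strict Implicit. Unset Printing Implicit Defensive.
Import Order.TTheory GRing.Theory Num.Theory.
Local Open Scope ring_scope.
Local Open Scope classical_set_scope.

Definition norm2 {R : realType} {d : nat} (v : 'cV[R]_d) : R :=
  Num.sqrt (\sum_(i < d) v i 0 ^+ 2).

Definition OB {R : realType} {d K : nat} (W : 'M[R]_(d, K)) : Prop :=
  forall k : 'I_K, norm2 (col k W) = 1.

Definition conv_rest {R : realType} {d K : nat} (W : 'M[R]_(d, K)) (k : 'I_K)
  : set 'cV[R]_d :=
  [set u | exists a : 'I_K -> R,
      (forall j, j != k -> 0 <= a j) /\
      \sum_(j < K | j != k) a j = 1 /\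
      u = \sum_(j < K | j != k) a j *: col j W].

Definition dist_rest {R : realType} {d K : nat} (W : 'M[R]_(d, K)) (k : 'I_K) : R :=
  inf [set norm2 (col k W - u) | u in conv_rest W k].

Definition rho_ovr {R : realType} {d K : nat} (W : 'M[R]_(d, K)) : R :=
  inf [set dist_rest W k | k in [set: 'I_K]].

Definition rho_ovo {R : realType} {d K : nat} (W : 'M[R]_(d, K)) : R :=
  inf [set x | exists k k' : 'I_K, k != k' /\ x = norm2 (col k W - col k' W)].

(* Main.v *)
Require Import Defs.
From mathcomp Require Import all_boot all_order all_algebra.
From mathcomp Require Import classical_sets reals.
From mathcomp Require Import ring lra.
Import Order.TTheory GRing.Theory Num.Theory.
Local Open Scope ring_scope.

Set Implicit Arguments. Unset Strict Implicit.
Section Aux.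
Variables (R : realType) (d : nat).
Definition dotc (v w : 'cV[R]_d) := \sum_i v i 0 * w i 0.

Lemma dotc_sym (v w : 'cV[R]_d) : dotc v w = dotc w v.
Proof. by apply: eq_bigr => i _; rewrite mulrC. Qed.

Lemma nsq (v : 'cV[R]_d) : norm2 v ^+ 2 = dotc v v.
Proof. rewrite /norm2 sqr_sqrtr //; apply: sumr_ge0 => i _; exact: sqr_ge0. Qed.

Lemma norm2_ge0 (v : 'cV[R]_d) : 0 <= norm2 v.
Proof. exact: sqrtr_ge0. Qed.

Lemma dotcB (v w z : 'cV[R]_d) : dotc v (w - z) = dotc v w - dotc v z.
Proof.
rewrite /dotc -sumrB; apply: eq_bigr => i _; rewrite !mxE; ring.
Qed.

Lemma dotc_exp (x y : 'cV[R]_d) (c : R) :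
  dotc (x - c *: y) (x - c *: y) = dotc x x - 2 * c * dotc x y + c ^+ 2 * dotc y y.
Proof.
rewrite /dotc !mulr_sumr -sumrB -big_split /=; apply: eq_bigr => i _.
rewrite !mxE; ring.
Qed.
End Aux.


Lemma core (R : realType) (d K : nat) (W : 'M[R]_(d, K)) (k : 'I_K) (rho : R)
  (a : 'I_K -> R) :
  OB W -> 0 <= rho ->
  (forall j, j != k -> rho <= norm2 (col k W - col j W)) ->
  (forall j, j != k -> 0 <= a j) ->
  \sum_(j < K | j != k) a j = 1 ->
  rho ^+ 2 / 2 <= norm2 (col k W - \sum_(j < K | j != k) a j *: col j W).
Proof.
move=> ob r0 hr ha hs.
set wk := col k W; set u := \sum_(j < K | j != k) a j *: col j W.
have hkk : dotc wk wk = 1 by rewrite -nsq ob expr1n.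
have hkj : forall j, j != k -> dotc wk (col j W) <= 1 - rho ^+ 2 / 2.
  move=> j /hr hj.
  have e := dotc_exp wk (col j W) 1.
  rewrite scale1r mulr1 expr1n mul1r -nsq hkk -nsq ob expr1n in e.
  have n0 := norm2_ge0 (wk - col j W).
  have : rho ^+ 2 <= norm2 (wk - col j W) ^+ 2 by rewrite !expr2; nra.
  rewrite e dotc_sym; lra.
have hu : dotc wk u = \sum_(j < K | j != k) a j * dotc wk (col j W).
  rewrite /dotc /u.
  under eq_bigr => i _ do rewrite summxE mulr_sumr.
  rewrite exchange_big /=; apply: eq_bigr => j _; rewrite mulr_sumr.
  by apply: eq_bigr => i _; rewrite !mxE; ring.
have hu2 : dotc wk u <= 1 - rho ^+ 2 / 2.
  rewrite hu; apply: le_trans (_ : \sum_(j < K | j != k) a j * (1 - rho ^+ 2 / 2) <= _).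
    by apply: ler_sum => j hj; apply: ler_wpM2l; [exact: ha | exact: hkj].
  by rewrite -mulr_suml hs mul1r.
set x := wk - u.
set t := 1 - dotc wk u.
have hxt : dotc x wk = t by rewrite dotc_sym /x dotcB hkk.
have e := dotc_exp x wk t.
rewrite hxt hkk in e.
have : 0 <= dotc (x - t *: wk) (x - t *: wk) by apply: sumr_ge0 => i _; rewrite -expr2 sqr_ge0.
rewrite e -nsq => h.
have n0 := norm2_ge0 x.
have ht : rho ^+ 2 / 2 <= t by rewrite /t; lra.
have r2 : 0 <= rho ^+ 2 / 2 by apply: divr_ge0; [exact: sqr_ge0 | by []].
apply: le_trans ht _.
rewrite !expr2 in h *; nra.
Qed.


Lemma sum_ind (R : realType) (V : lmodType R) (K : nat) (k j : 'I_K) (F : 'I_K -> V) :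
  j != k -> \sum_(i < K | i != k) (if i == j then 1 else 0 : R) *: F i = F j.
Proof.
move=> jk; rewrite (bigD1 j) //= eqxx scale1r big1 ?addr0 // => i /andP[_ /negbTE ->].
by rewrite scale0r.
Qed.

Lemma sum_ind1 (R : realType) (K : nat) (k j : 'I_K) :
  j != k -> \sum_(i < K | i != k) (if i == j then 1 else 0 : R) = 1.
Proof.
move=> jk; rewrite (bigD1 j) //= eqxx big1 ?addr0 // => i /andP[_ /negbTE ->] //.
Qed.

Lemma other (K : nat) (k : 'I_K) : (2 <= K)%N -> exists j : 'I_K, j != k.
Proof.
move=> HK.
have h0 : (0 < K)%N by apply: leq_trans HK.
have h1 : (1 < K)%N by [].
case: (eqVneq (Ordinal h0) k) => e.
  by exists (Ordinal h1); rewrite -e.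
by exists (Ordinal h0).
Qed.

Theorem mainTheorem15 (R : realType) (d K : nat) (W : 'M[R]_(d, K)) :
  (1 <= d)%N -> (2 <= K)%N -> OB W ->
  rho_ovo W ^+ 2 / 2 <= rho_ovr W /\ rho_ovr W <= rho_ovo W.
Proof.
move=> _ HK ob.
have h0 : (0 < K)%N by apply: leq_trans HK.
pose k0 : 'I_K := Ordinal h0.
have ovo_lb : forall k k' : 'I_K, k != k' -> rho_ovo W <= norm2 (col k W - col k' W).
  move=> k k' kk'; apply: ge_inf; first by exists 0 => y [? [? [_ ->]]]; exact: norm2_ge0.
  by exists k, k'.
have ovo0 : 0 <= rho_ovo W.
  apply: lb_le_inf; last by move=> y [? [? [_ ->]]]; exact: norm2_ge0.
  have [j jk] := other k0 HK.
  by exists (norm2 (col j W - col k0 W)); exists j, k0.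
have conv_ne : forall k : 'I_K, forall j, j != k ->
    conv_rest W k (col j W).
  move=> k j jk; exists (fun i => if i == j then 1 else 0); split.
    by move=> i _; case: (i == j).
  by split; [exact: sum_ind1 | rewrite sum_ind].
have dist_ub : forall k j : 'I_K, j != k -> dist_rest W k <= norm2 (col k W - col j W).
  move=> k j jk; apply: ge_inf.
    by exists 0 => y [u _ <-]; exact: norm2_ge0.
  by exists (col j W) => //; exact: conv_ne.
have dist_lb : forall k : 'I_K, rho_ovo W ^+ 2 / 2 <= dist_rest W k.
  move=> k; apply: lb_le_inf.
    have [j jk] := other k HK.
    by exists (norm2 (col k W - col j W)); exists (col j W) => //; exact: conv_ne.
  move=> y [u [a [ha [hs ->]]] <-].
  apply: core => // j jk; apply: ovo_lb; by rewrite eq_sym.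
have dist0 : forall k : 'I_K, 0 <= dist_rest W k.
  move=> k; apply: le_trans (dist_lb k).
  by apply: divr_ge0; [exact: sqr_ge0 | by []].
split.
  apply: lb_le_inf; first by exists (dist_rest W k0); exists k0.
  by move=> y [k _ <-].
apply: lb_le_inf.
  have [j jk] := other k0 HK.
  by exists (norm2 (col j W - col k0 W)); exists j, k0.
move=> y [k [k' [kk' ->]]].
apply: le_trans (dist_ub k k' _); last by rewrite eq_sym.
apply: ge_inf; last by exists k.
by exists 0 => z [j _ <-].
Qed.
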